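(* Let $n\ge 2$ be an integer that is a multiple of $3$. If the Aztec diamond $\operatorname{AD}(n-1)$ has a cover by L-trominoes, then $\operatorname{AD}(n+3)$ has a cover by L-trominoes.
   Context: A cell is a unit square $[i,i+1]\times[j,j+1]$ with $i,j\in\mathbb{Z}$. An L-tromino is a set of three cells equal to a $2\times 2$ block of cells with one cell removed. A cover of a region $R$ (a finite edge-connected set of cells) is a set of pairwise disjoint L-trominoes contained in $R$ whose union is $R$. The Aztec diamond $\operatorname{AD}(n)$ is the union of the cells $[a,a+1]\times[b,b+1]$, $a,b\in\mathbb{Z}$, lying completely inside $\{(x,y): |x|+|y|\le n+1\}$. *)

(* Defs.v *)
From Stdlib Require Import ZArith Reals List.
Import ListNotations.

(* The cell [a,a+1] x [b,b+1] is represented by its lower-left corner (a,b). *)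
Definition cell : Type := (Z * Z)%type.

Definition region : Type := cell -> Prop.

Definition block (i j : Z) (c : cell) : Prop :=
  (i <= fst c <= i + 1)%Z /\ (j <= snd c <= j + 1)%Z.

(* An L-tromino is given by a 2x2 block (i,j) and the removed cell r of that block. *)
Definition tromino : Type := (Z * Z * cell)%type.

Definition valid_tromino (t : tromino) : Prop :=
  let '(i, j, r) := t in block i j r.

Definition tcells (t : tromino) (c : cell) : Prop :=
  let '(i, j, r) := t in block i j c /\ c <> r.

(* A cover of R: a (finite) family of pairwise disjoint L-trominoes contained in R
   whose union is R.  Distinct positions in the list must be disjoint, so the
   list represents a set of trominoes. *)
Definition is_cover (R : region) (T : list tromino) : Prop :=
  (forall t, In t T -> valid_tromino t) /\
  (forall t, In t T -> forall c, tcells t c -> R c) /\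
  (forall c, R c -> exists t, In t T /\ tcells t c) /\
  (forall (k l : nat) (t1 t2 : tromino),
      nth_error T k = Some t1 -> nth_error T l = Some t2 -> k <> l ->
      forall c, ~ (tcells t1 c /\ tcells t2 c)).

Definition has_cover (R : region) : Prop := exists T, is_cover R T.

Definition AD (n : Z) (c : cell) : Prop :=
  forall x y : R, (
    IZR (fst c) <= x <= IZR (fst c) + 1 ->
    IZR (snd c) <= y <= IZR (snd c) + 1 ->
    Rabs x + Rabs y <= IZR n + 1)%R.

(* Main.v *)
Require Import Defs.
From Stdlib Require Import ZArith Reals List.
From Stdlib Require Import Lia Lra.
Import ListNotations.

Open Scope Z_scope.

Definition fz (a : Z) : Z := Z.max (a + 1) (- a).

Definition ADZ (m : Z) (c : cell) : Prop := fz (fst c) + fz (snd c) <= m + 1.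

Lemma Rabs_bound (a : Z) (x : R) :
  (IZR a <= x <= IZR a + 1)%R -> (Rabs x <= IZR (fz a))%R.
Proof.
  intros [H1 H2]. apply Rabs_le.
  assert (A1 : (IZR (a + 1) <= IZR (fz a))%R) by (apply IZR_le; unfold fz; lia).
  assert (A2 : (IZR (- fz a) <= IZR a)%R) by (apply IZR_le; unfold fz; lia).
  rewrite plus_IZR in A1. rewrite opp_IZR in A2. lra.
Qed.

Lemma AD_iff (m : Z) (c : cell) : AD m c <-> ADZ m c.
Proof.
  destruct c as [a b]. unfold AD, ADZ; simpl. split.
  - intros H.
    set (xa := if Z_le_dec 0 a then a + 1 else a).
    set (yb := if Z_le_dec 0 b then b + 1 else b).
    assert (Hx : (IZR a <= IZR xa <= IZR a + 1)%R).
    { unfold xa; destruct (Z_le_dec 0 a); split; try rewrite plus_IZR; lra. }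
    assert (Hy : (IZR b <= IZR yb <= IZR b + 1)%R).
    { unfold yb; destruct (Z_le_dec 0 b); split; try rewrite plus_IZR; lra. }
    specialize (H _ _ Hx Hy).
    rewrite !Rabs_Zabs in H. rewrite <- plus_IZR, <- plus_IZR in H.
    apply le_IZR in H.
    assert (Z.abs xa = fz a) by (unfold xa, fz; destruct (Z_le_dec 0 a); lia).
    assert (Z.abs yb = fz b) by (unfold yb, fz; destruct (Z_le_dec 0 b); lia).
    lia.
  - intros H x y Hx Hy.
    pose proof (Rabs_bound a x Hx). pose proof (Rabs_bound b y Hy).
    assert (H2 : (IZR (fz a + fz b) <= IZR (m + 1))%R) by (apply IZR_le; lia).
    rewrite !plus_IZR in H2. lra.
Qed.

Lemma tcells_iff i j r1 r2 x y :
  tcells (i, j, (r1, r2)) (x, y) <->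
  ((i <= x <= i + 1 /\ j <= y <= j + 1) /\ (x <> r1 \/ y <> r2)).
Proof.
  unfold tcells, block; simpl. split.
  - intros [Hb Hn]. split; [exact Hb|].
    destruct (Z.eq_dec x r1); [|left; auto].
    destruct (Z.eq_dec y r2); [|right; auto]. subst; tauto.
  - intros [Hb Hn]. split; [exact Hb|]. intros E; inversion E; lia.
Qed.

Lemma cover_ext (R R' : region) T :
  (forall c, R c <-> R' c) -> is_cover R T -> is_cover R' T.
Proof.
  intros E [V [C [Cv D]]]. split; [|split; [|split]]; auto.
  - intros t Ht c Hc. apply E. eapply C; eauto.
  - intros c Hc. apply Cv. apply E. auto.
Qed.

Lemma cover_union (R R1 R2 : region) T1 T2 :
  (forall c, R c <-> R1 c \/ R2 c) -> (forall c, R1 c -> R2 c -> False) ->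
  is_cover R1 T1 -> is_cover R2 T2 -> is_cover R (T1 ++ T2).
Proof.
  intros E Dj [V1 [C1 [Cv1 D1]]] [V2 [C2 [Cv2 D2]]].
  split; [|split; [|split]].
  - intros t Ht. apply in_app_or in Ht. destruct Ht; auto.
  - intros t Ht c Hc. apply E. apply in_app_or in Ht. destruct Ht.
    + left. eapply C1; eauto.
    + right. eapply C2; eauto.
  - intros c Hc. apply E in Hc. destruct Hc as [Hc|Hc].
    + destruct (Cv1 c Hc) as [t [Ht Htc]]. exists t. split; auto. apply in_or_app; auto.
    + destruct (Cv2 c Hc) as [t [Ht Htc]]. exists t. split; auto. apply in_or_app; auto.
  - intros k l t1 t2 H1 H2 Hkl c [Hc1 Hc2].
    destruct (Nat.lt_ge_cases k (length T1)) as [Hk|Hk];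
    destruct (Nat.lt_ge_cases l (length T1)) as [Hl|Hl].
    + rewrite nth_error_app1 in H1 by auto. rewrite nth_error_app1 in H2 by auto.
      exact (D1 k l t1 t2 H1 H2 Hkl c (conj Hc1 Hc2)).
    + rewrite nth_error_app1 in H1 by auto. rewrite nth_error_app2 in H2 by auto.
      apply (Dj c).
      * eapply C1; [eapply nth_error_In; eauto | eauto].
      * eapply C2; [eapply nth_error_In; eauto | eauto].
    + rewrite nth_error_app2 in H1 by auto. rewrite nth_error_app1 in H2 by auto.
      apply (Dj c).
      * eapply C1; [eapply nth_error_In; eauto | eauto].
      * eapply C2; [eapply nth_error_In; eauto | eauto].
    + rewrite nth_error_app2 in H1 by auto. rewrite nth_error_app2 in H2 by auto.
      refine (D2 (k - length T1)%nat (l - length T1)%nat t1 t2 H1 H2 _ c (conj Hc1 Hc2)). lia.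
Qed.

Lemma cover_map (h : cell -> cell) (gt : tromino -> tromino) (R : region) T :
  (forall t, valid_tromino t -> valid_tromino (gt t)) ->
  (forall t, valid_tromino t -> forall c, tcells (gt t) c <-> tcells t (h c)) ->
  is_cover R T -> is_cover (fun c => R (h c)) (map gt T).
Proof.
  intros Hv Hc [V [C [Cv D]]]. split; [|split; [|split]].
  - intros t Ht. apply in_map_iff in Ht. destruct Ht as [t' [<- Ht']]. auto.
  - intros t Ht c Htc. apply in_map_iff in Ht. destruct Ht as [t' [<- Ht']].
    eapply C; eauto. apply Hc; auto.
  - intros c Hrc. destruct (Cv _ Hrc) as [t [Ht Htc]]. exists (gt t). split.
    + apply in_map; auto.
    + apply Hc; auto.
  - intros k l t1 t2 H1 H2 Hkl c [Hc1 Hc2].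
    rewrite nth_error_map in H1, H2.
    destruct (nth_error T k) as [u1|] eqn:E1; [|discriminate].
    destruct (nth_error T l) as [u2|] eqn:E2; [|discriminate].
    simpl in H1, H2. inversion H1; inversion H2; subst.
    apply (D k l u1 u2 E1 E2 Hkl (h c)). split.
    + apply Hc; [apply V; eapply nth_error_In; eauto|auto].
    + apply Hc; [apply V; eapply nth_error_In; eauto|auto].
Qed.

Definition tr_tr (dx dy : Z) (t : tromino) : tromino :=
  let '(i, j, (r1, r2)) := t in (i + dx, j + dy, (r1 + dx, r2 + dy)).
Definition rx_tr (t : tromino) : tromino :=
  let '(i, j, (r1, r2)) := t in (-2 - i, j, (-1 - r1, r2)).
Definition ry_tr (t : tromino) : tromino :=
  let '(i, j, (r1, r2)) := t in (i, -2 - j, (r1, -1 - r2)).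

Definition hT (dx dy : Z) (c : cell) : cell := (fst c - dx, snd c - dy).
Definition hX (c : cell) : cell := (-1 - fst c, snd c).
Definition hY (c : cell) : cell := (fst c, -1 - snd c).

Lemma cover_tr dx dy R T : is_cover R T -> is_cover (fun c => R (hT dx dy c)) (map (tr_tr dx dy) T).
Proof.
  apply cover_map.
  - intros [[i j] [r1 r2]]; unfold valid_tromino, block, tr_tr, rx_tr, ry_tr; cbn [fst snd]; lia.
  - intros [[i j] [r1 r2]] _ [x y]; unfold hT, hX, hY, tr_tr, rx_tr, ry_tr; simpl fst; simpl snd. rewrite !tcells_iff. lia.
Qed.

Lemma cover_rx R T : is_cover R T -> is_cover (fun c => R (hX c)) (map rx_tr T).
Proof.
  apply cover_map.
  - intros [[i j] [r1 r2]]; unfold valid_tromino, block, tr_tr, rx_tr, ry_tr; cbn [fst snd]; lia.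
  - intros [[i j] [r1 r2]] _ [x y]; unfold hT, hX, hY, tr_tr, rx_tr, ry_tr; simpl fst; simpl snd. rewrite !tcells_iff. lia.
Qed.

Lemma cover_ry R T : is_cover R T -> is_cover (fun c => R (hY c)) (map ry_tr T).
Proof.
  apply cover_map.
  - intros [[i j] [r1 r2]]; unfold valid_tromino, block, tr_tr, rx_tr, ry_tr; cbn [fst snd]; lia.
  - intros [[i j] [r1 r2]] _ [x y]; unfold hT, hX, hY, tr_tr, rx_tr, ry_tr; simpl fst; simpl snd. rewrite !tcells_iff. lia.
Qed.

Definition Q (n : Z) (c : cell) : Prop :=
  0 <= fst c /\ 0 <= snd c /\ n - 1 <= fst c + snd c <= n + 2.
Definition P0 (c : cell) : Prop := 0 <= fst c <= 2 /\ 0 <= fst c + snd c <= 3.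

Definition TP : list tromino :=
  [(0, 0, (1, 0)); (0, 2, (1, 3)); (1, -2, (1, -2)); (1, 0, (1, 1))].
Definition TE : list tromino :=
  [(0, 2, (1, 2)); (0, 4, (1, 5)); (1, 1, (2, 2)); (2, 0, (2, 1)); (2, 2, (3, 3)); (4, 0, (5, 1))].

Ltac in_enum H :=
  simpl in H; repeat (destruct H as [H|H]; [subst|]); [..|contradiction].

Ltac solve_ex :=
  apply Exists_exists;
  repeat (first [apply Exists_cons_hd; apply tcells_iff; lia | apply Exists_cons_tl]).

Lemma cover_P0 : is_cover P0 TP.
Proof.
  split; [|split; [|split]].
  - intros t H; in_enum H; unfold valid_tromino, block; simpl; lia.
  - intros t H; in_enum H; intros [x y] Hc; rewrite tcells_iff in Hc; unfold P0; simpl; lia.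
  - intros [x y] Hc. unfold P0 in Hc; simpl in Hc.
    assert (x = 0 \/ x = 1 \/ x = 2) as Hx by lia.
    assert (y = -2 \/ y = -1 \/ y = 0 \/ y = 1 \/ y = 2 \/ y = 3) as Hy by lia.
    destruct Hx as [->|[->| ->]]; destruct Hy as [->|[->|[->|[->|[->| ->]]]]];
      try (exfalso; lia); solve_ex.
  - intros k l t1 t2 H1 H2 Hkl [x y] [Hc1 Hc2].
    destruct k as [|[|[|[|k]]]]; destruct l as [|[|[|[|l]]]]; simpl in H1, H2;
      try rewrite nth_error_nil in H1; try rewrite nth_error_nil in H2; try discriminate; try congruence;
      inversion H1; inversion H2; subst; rewrite tcells_iff in Hc1, Hc2; lia.
Qed.

Lemma cover_E : is_cover (Q 3) TE.
Proof.
  split; [|split; [|split]].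
  - intros t H; in_enum H; unfold valid_tromino, block; simpl; lia.
  - intros t H; in_enum H; intros [x y] Hc; rewrite tcells_iff in Hc; unfold Q; simpl; lia.
  - intros [x y] Hc. unfold Q in Hc; simpl in Hc.
    assert (x = 0 \/ x = 1 \/ x = 2 \/ x = 3 \/ x = 4 \/ x = 5) as Hx by lia.
    assert (y = 0 \/ y = 1 \/ y = 2 \/ y = 3 \/ y = 4 \/ y = 5) as Hy by lia.
    destruct Hx as [->|[->|[->|[->|[->| ->]]]]]; destruct Hy as [->|[->|[->|[->|[->| ->]]]]];
      try (exfalso; lia); solve_ex.
  - intros k l t1 t2 H1 H2 Hkl [x y] [Hc1 Hc2].
    destruct k as [|[|[|[|[|[|k]]]]]]; destruct l as [|[|[|[|[|[|l]]]]]]; simpl in H1, H2;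
      try rewrite nth_error_nil in H1; try rewrite nth_error_nil in H2; try discriminate; try congruence;
      inversion H1; inversion H2; subst; rewrite tcells_iff in Hc1, Hc2; lia.
Qed.

Lemma cover_Q (k : nat) : has_cover (Q (3 * Z.of_nat k + 3)).
Proof.
  induction k as [|k [T HT]].
  - exists TE. exact cover_E.
  - set (n := 3 * Z.of_nat k + 3) in *.
    exists (map (tr_tr 3 0) T ++ map (tr_tr 0 (n + 2)) TP).
    apply (cover_union _ (fun c => Q n (hT 3 0 c)) (fun c => P0 (hT 0 (n + 2) c))).
    + intros [x y]. unfold Q, P0, hT; cbn [fst snd]. replace (3 * Z.of_nat (S k) + 3) with (n + 3) by (unfold n; lia).
      assert (0 <= n) by (unfold n; lia). lia.
    + intros [x y]. unfold Q, P0, hT; cbn [fst snd]. lia.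
    + apply cover_tr; auto.
    + apply cover_tr; exact cover_P0.
Qed.

Theorem corollary3 (n : Z) (hn : (2 <= n)%Z) (h3 : (3 | n)%Z) :
  has_cover (AD (n - 1)) -> has_cover (AD (n + 3)).
Proof.
  intros [T0 H0].
  destruct h3 as [z Hz].
  assert (Hk : n = 3 * Z.of_nat (Z.to_nat (z - 1)) + 3) by lia.
  destruct (cover_Q (Z.to_nat (z - 1))) as [TQ HQ]. rewrite <- Hk in HQ.
  exists (T0 ++ (TQ ++ (map rx_tr TQ ++ (map ry_tr TQ ++ map rx_tr (map ry_tr TQ))))).
  apply (cover_union _ (ADZ (n - 1))
     (fun c => Q n c \/ Q n (hX c) \/ Q n (hY c) \/ Q n (hY (hX c)))).
  - intros c. rewrite AD_iff. destruct c as [x y]. unfold ADZ, Q, hX, hY, fz; cbn [fst snd]. lia.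
  - intros [x y]. unfold ADZ, Q, hX, hY, fz; cbn [fst snd]. lia.
  - apply (cover_ext (AD (n - 1))); auto. intros; apply AD_iff.
  - apply (cover_union _ (Q n) (fun c => Q n (hX c) \/ Q n (hY c) \/ Q n (hY (hX c)))).
    + tauto.
    + intros [x y]. unfold Q, hX, hY; cbn [fst snd]. lia.
    + exact HQ.
    + apply (cover_union _ (fun c => Q n (hX c)) (fun c => Q n (hY c) \/ Q n (hY (hX c)))).
      * tauto.
      * intros [x y]. unfold Q, hX, hY; cbn [fst snd]. lia.
      * apply cover_rx; exact HQ.
      * apply (cover_union _ (fun c => Q n (hY c)) (fun c => Q n (hY (hX c)))).
        -- tauto.
        -- intros [x y]. unfold Q, hX, hY; cbn [fst snd]. lia.
        -- apply cover_ry; exact HQ.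
        -- apply (cover_rx (fun c => Q n (hY c))). apply cover_ry; exact HQ.
Qed.
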